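(* Fix $n\ge 2$ and $i\in\{1,\dots,n\}$. Then for every integer $k\ge 1$: (1) $\partial[i]\,\lambda_n^{(k)}=(-1)^{i-1}\,k\,\lambda_{n-1}^{(k)}$; (2) for $1\le k\le n$, $\partial[i]\,e_n^{(k)}=(-1)^{i-1}\,e_{n-1}^{(k-1)}$, where $e_{n-1}^{(0)}:=0$ and $e_{n-1}^{(n)}:=0$ (in particular $\partial[i]e_n^{(1)}=0$). Here both sides are regarded as elements of the span of words on $\{1,\dots,n\}\setminus\{i\}$ via the identification described in the context.
   Context: Identify each permutation $\sigma\in S_r$ with the injective word $\sigma(1)\sigma(2)\cdots\sigma(r)$ on $\{1,\dots,r\}$ (one-line notation), so that elements of the group algebra $\mathbb{C}S_r$ are linear combinations of such words. A descent of a word $w_1\cdots w_m$ is an index $t$ with $w_t>w_{t+1}$. For $1\le k\le r$ let $S(r;k)$ be the set of permutations in $S_r$ with exactly $k-1$ descents, and define $l_r^{(k)}=(-1)^{k-1}\sum_{\sigma\in S(r;k)}\mathrm{sgn}(\sigma)\,\sigma$ (with $l_r^{(k)}=0$ if $S(r;k)$ is empty, e.g. $k>r$), and $\lambda_r^{(k)}=\sum_{t=0}^{k-1}(-1)^t\binom{r+t}{t}\,l_r^{(k-t)}$ for $k\ge1$. The Eulerian idempotents $e_r^{(1)},\dots,e_r^{(r)}\in\mathbb{C}S_r$ are the elements satisfying $(-1)^{k-1}\lambda_r^{(k)}=\sum_{j=1}^{r}k^j e_r^{(j)}$ for all integers $k\ge1$ (they are determined by the cases $k=1,\dots,r$ since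 the matrix $(k^j)$ is an invertible Vandermonde matrix). For an injective word $a_1\cdots a_m$ on $\{1,\dots,n\}$, the simplicial boundary is $\partial(a_1\cdots a_m)=\sum_{j=1}^m(-1)^{j-1}a_1\cdots a_{j-1}a_{j+1}\cdots a_m$, extended linearly. For $i\in\{1,\dots,n\}$, $\partial[i]$ denotes the part of $\partial$ that deletes the letter $i$: $\partial[i](a_1\cdots a_m)=(-1)^{j-1}a_1\cdots\widehat{a_j}\cdots a_m$ if $a_j=i$, and $0$ if $i$ does not occur. Words on $\{1,\dots,n\}\setminus\{i\}$ of length $n-1$ are identified with permutations in $S_{n-1}$ by replacing each letter $i+t$ ($t\ge1$) by $i+t-1$; via this identification $\lambda_{n-1}^{(k)}$ and $e_{n-1}^{(k)}$ are viewed as linear combinations of words on $\{1,\dots,n\}\setminus\{i\}$. *)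

(* Defs.v *)
From HB Require Import structures.
From mathcomp Require Import all_boot all_order all_algebra.
From mathcomp Require Import fingroup perm algC.
Set Implicit Arguments. Unset Strict Implicit. Unset Printing Implicit Defensive.
Import Order.TTheory GRing.Theory Num.Theory.
Local Open Scope ring_scope.

(* Letters are 0-based: the letter a : 'I_r stands for the paper's letter a+1. *)

Definition word (r : nat) (s : 'S_r) : seq nat := [seq val (s j) | j <- enum 'I_r].

Definition ndes (w : seq nat) : nat :=
  count (fun t => nth 0%N w t.+1 < nth 0%N w t)%N (iota 0 (size w).-1).

(* Elements of C S_r are coefficient functions 'S_r -> algC. *)
Definition sgnp (r : nat) (s : 'S_r) : algC := (-1) ^+ odd_perm s.

Definition lE (r k : nat) (s : 'S_r) : algC :=
  if (1 <= k)%N && (ndes (word s) == k.-1) then (-1) ^+ k.-1 * sgnp s else 0.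

Definition lam (r k : nat) (s : 'S_r) : algC :=
  \sum_(t < k) (-1) ^+ (t : nat) * ('C(r + t, t))%:R * @lE r (k - t)%N s.

(* Vandermonde matrix (k^j)_{1<=k,j<=r}, 0-based indices a,b stand for k=a+1, j=b+1 *)
Definition vdm (r : nat) : 'M[algC]_r := \matrix_(a < r, b < r) ((a.+1)%:R ^+ b.+1).

(* Eulerian idempotent e_r^(j): the unique solution of
   (-1)^(k-1) lambda_r^(k) = sum_{j=1}^r k^j e_r^(j), k = 1..r.
   It is 0 unless 1 <= j <= r (so e_r^(0) = 0, e_r^(r+1) = 0). *)
Definition eul (r j : nat) (s : 'S_r) : algC :=
  \sum_(b < r | b.+1 == j) \sum_(a < r) invmx (vdm r) b a * ((-1) ^+ a * @lam r a.+1 s).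

(* partial[i] : C S_n -> C S_{n-1} (via the relabelling of letters > i). *)
Definition bd (n : nat) (i : nat) (x : 'S_n -> algC) (t : 'S_n.-1) : algC :=
  \sum_(s : 'S_n | [seq unbump i a | a <- word s & a != i] == word t)
     (-1) ^+ (index i (word s)) * x s.

Arguments lE r k s : clear implicits.
Arguments lam r k s : clear implicits.
Arguments eul r j s : clear implicits.

(* Main.v *)
Require Import Defs.
From HB Require Import structures.
From mathcomp Require Import all_boot all_order all_algebra.
From mathcomp Require Import fingroup perm algC.
From mathcomp Require Import zify ring.
Set Implicit Arguments. Unset Strict Implicit. Unset Printing Implicit Defensive.
Import GRing.Theory Num.Theory.
Local Open Scope ring_scope.

Fixpoint des (w : seq nat) : nat :=
  match w with x :: ((y :: _) as w') => ((y < x)%N : nat) + des w' | _ => 0 end%N.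

Lemma ndes_cons2 x y w : ndes (x :: y :: w) = ((y < x)%N : nat) + ndes (y :: w).
Proof.
rewrite /ndes /=.
have -> : iota 1 (size w) = map (addn 1) (iota 0 (size w)) by rewrite -iotaDl.
by rewrite count_map.
Qed.

Lemma ndesE w : ndes w = des w.
Proof.
elim: w => [|x w IH] //; case: w IH => [|y w] IH //.
by rewrite ndes_cons2 IH.
Qed.

Definition ins (j x : nat) (u : seq nat) := take j u ++ x :: drop j u.

Lemma ins0 x u : ins 0 x u = x :: u. Proof. by rewrite /ins take0 drop0. Qed.
Lemma insS j x y u : ins j.+1 x (y :: u) = y :: ins j x u. Proof. by []. Qed.

Lemma des_cons2 x y w : des (x :: y :: w) = ((y < x)%N : nat) + des (y :: w).
Proof. by []. Qed.

Lemma des1 x : des [:: x] = 0%N. Proof. by []. Qed.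
Lemma des_ins_bound u x j : (des u <= des (ins j x u) <= (des u).+1)%N.
Proof.
elim: u j => [|y u IH] j.
  by case: j => [|j]; rewrite /ins.
case: j => [|j].
  by rewrite ins0 des_cons2; case: (y < x)%N => /=; lia.
rewrite insS.
case: j => [|j].
  rewrite ins0 des_cons2.
  case: u {IH} => [|z u] /=.
    by case: (x < y)%N => /=; lia.
  case: (ltngtP x y); case: (ltngtP z x); case: (ltngtP z y) => //=; lia.
case: u IH => [|z u] IH.
  by rewrite /ins /= /=; case: (x < y)%N => /=; lia.
rewrite insS des_cons2 [des (y :: _)]des_cons2 -insS.
by have := IH j.+1; lia.
Qed.

Arguments des : simpl never.
Arguments ins : simpl never.

Lemma sum_ordS (m : nat) (f : nat -> nat) :
  (\sum_(j < m.+1) f j = f 0 + \sum_(j < m) f j.+1)%N.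
Proof. by rewrite big_ord_recl. Qed.

Lemma des_ins_sum (u : seq nat) (x : nat) : x \notin u ->
  (\sum_(j < (size u).+1) des (ins j x u) + des u = (size u).+1 * des u + size u)%N.
Proof.
elim: u => [|y u IH] xu.
  by rewrite big_ord1 ins0.
rewrite inE negb_or in xu; case/andP: xu => xy xu.
have {}IH := IH xu.
rewrite [size _]/= (sum_ordS _ (fun j => des (ins j x (y :: u)))) ins0.
under eq_bigr do rewrite insS.
case: u IH xu => [|z u] IH xu.
  rewrite big_ord1 ins0 !des_cons2 !des1 /=.
  by case: (ltngtP x y) xy => //=; lia.
rewrite [size _]/= (sum_ordS _ (fun j => des (ins j x (z :: u)))) ins0 in IH.
rewrite [size _]/= (sum_ordS _ (fun j => des (y :: ins j x (z :: u)))) ins0.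
under eq_bigr do rewrite insS des_cons2.
rewrite big_split /= sum_nat_const card_ord.
rewrite (eq_bigr (fun j : 'I_ _ => des (z :: ins j x u))) in IH; last by move=> j; rewrite insS.
rewrite !des_cons2 in IH *.
move: IH; set S := (\sum_(i < _) _)%N.
have H1 : (((y < x)%N : nat) + ((x < y)%N : nat) = 1)%N.
  by case: (ltngtP x y) xy => //=.
move: H1; set a := nat_of_bool (y < x)%N; set b := nat_of_bool (x < y)%N.
set c := nat_of_bool (z < y)%N; set e := nat_of_bool (x < z)%N.
move=> H1 IH; nia.
Qed.

Lemma size_word r (s : 'S_r) : size (word s) = r.
Proof. by rewrite /word size_map size_enum_ord. Qed.

Lemma nth_word r (s : 'S_r) (p : 'I_r) : nth 0%N (word s) p = s p.
Proof.
rewrite /word (nth_map p) ?size_enum_ord //; congr (val (s _)).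
by apply: val_inj; rewrite /= nth_enum_ord.
Qed.

Lemma word_lift n' (i j : 'I_n'.+1) (t : 'S_n') :
  word (lift_perm j i t) = ins j i (map (bump i) (word t)).
Proof.
have sz : size (map (bump i) (word t)) = n' by rewrite size_map size_word.
apply: (@eq_from_nth _ 0%N).
  by rewrite size_word /ins size_cat /= size_take size_drop sz; have := ltn_ord j; case: ifP; lia.
move=> p; rewrite size_word => pn.
rewrite (nth_word _ (Ordinal pn)) /ins nth_cat size_take sz.
have jn : (j <= n')%N by case: j => /= j; lia.
rewrite (_ : (if (j < n')%N then (j : nat) else n') = j); last by case: ifP; lia.
case: (ltngtP p j) => pj.
- have pj' : (p < n')%N by lia.
  rewrite nth_take // (nth_map 0%N) ?size_word //.
  have -> : Ordinal pn = lift j (Ordinal pj') by apply: val_inj; rewrite /= /bump; case: leqP; lia.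
  by rewrite lift_perm_lift (nth_word t (Ordinal pj')).
- have pj' : (p.-1 < n')%N by lia.
  rewrite (_ : p - j = (p - j.+1).+1)%N /=; last by lia.
  rewrite nth_drop (_ : j + (p - j.+1) = p.-1)%N; last by lia.
  rewrite (nth_map 0%N) ?size_word //.
  have -> : Ordinal pn = lift j (Ordinal pj') by apply: val_inj; rewrite /= /bump; case: leqP; lia.
  by rewrite lift_perm_lift (nth_word t (Ordinal pj')).
- have -> : Ordinal pn = j by apply: val_inj.
  by rewrite lift_perm_id pj subnn.
Qed.

Lemma word_inj r : injective (@word r).
Proof.
move=> s1 s2 /eq_in_map H; apply/permP => p.
by apply: val_inj; apply: H; rewrite mem_enum.
Qed.

Lemma notin_bump n' (i : 'I_n'.+1) (w : seq nat) : (val i) \notin map (bump i) w.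
Proof.
apply/mapP => -[a _] /eqP; by rewrite (negbTE (neq_bump _ _)).
Qed.

Lemma filter_word_lift n' (i j : 'I_n'.+1) (t : 'S_n') :
  [seq unbump (val i) a | a <- word (lift_perm j i t) & a != val i] = word t.
Proof.
rewrite word_lift /ins filter_cat /= eqxx /=.
have H : forall w : seq nat, w \in [:: take j (map (bump i) (word t)); drop j (map (bump i) (word t))] ->
  [seq a <- w | a != val i] = w.
  move=> w; rewrite !inE => /orP [] /eqP -> ; apply/all_filterP/allP => a Ha;
  apply/negP => /eqP Hai; move: Ha; rewrite Hai;
  [move/mem_take | move/mem_drop]; by rewrite (negbTE (notin_bump _ _)).
rewrite !H ?inE ?eqxx ?orbT // cat_take_drop -map_comp.
by rewrite (eq_map (@bumpK i)) map_id.
Qed.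

Lemma index_word_lift n' (i j : 'I_n'.+1) (t : 'S_n') :
  index (val i) (word (lift_perm j i t)) = j.
Proof.
rewrite word_lift /ins index_cat.
have -> : (val i \in take j (map (bump i) (word t))) = false.
  by apply/negP => /mem_take; rewrite (negbTE (notin_bump _ _)).
rewrite /= eqxx addn0 size_take size_map size_word.
by have := ltn_ord j; case: ifP; lia.
Qed.

Lemma bd_lift n' (i : 'I_n'.+1) (x : 'S_n'.+1 -> algC) (t : 'S_n') :
  bd i x t = \sum_(j < n'.+1) (-1) ^+ j * x (lift_perm j i t).
Proof.
pose h := fun p : 'I_n'.+1 * 'S_n' => lift_perm p.1 i p.2.
have hinj : injective h.
  move=> [j1 t1] [j2 t2]; rewrite /h /= => E.
  have ej : j1 = j2.
    have e : forall j t', ((lift_perm j i t')^-1)%g i = j.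
      by move=> j t'; apply: (@perm_inj _ (lift_perm j i t')); rewrite permKV lift_perm_id.
    by rewrite -(e j1 t1) -(e j2 t2) E.
  subst j2; congr (_, _); apply/permP => k; apply: (@lift_inj _ i).
  by rewrite -!(lift_perm_lift j1) E.
have hbij : bijective h.
  apply: (inj_card_bij hinj).
  by rewrite card_prod card_ord !card_Sn factS.
rewrite /bd (reindex h); last exact: onW_bij.
rewrite (eq_bigl (fun p => p.2 == t)); last first.
  by move=> [j t'] /=; rewrite /h /= filter_word_lift (inj_eq (@word_inj _)).
rewrite -(pair_big xpredT (fun t' => t' == t) (fun (j : 'I_n'.+1) t' => (-1) ^+ index (val i) (word (h (j, t'))) * x (h (j, t')))) /=.
apply: eq_bigr => j _; rewrite big_pred1_eq /h /=.
by rewrite index_word_lift.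
Qed.

Lemma sgnp_lift n' (i j : 'I_n'.+1) (t : 'S_n') :
  sgnp (lift_perm j i t) = (-1) ^+ (j + i)%N * sgnp t.
Proof.
by rewrite /sgnp odd_lift_perm !signr_addb !signr_odd exprD mulrA.
Qed.

Definition gC (r k d : nat) : algC :=
  if (d < k)%N then ('C(r + (k.-1 - d), r))%:R else 0.

Lemma lamE r k (s : 'S_r) : (1 <= k)%N ->
  lam r k s = (-1) ^+ k.-1 * sgnp s * gC r k (des (word s)).
Proof.
move=> k1; rewrite /lam /lE /gC ndesE.
set d := des (word s); clearbody d.
case: (ltnP d k) => dk.
  have t0k : (k.-1 - d < k)%N by lia.
  rewrite (bigD1 (Ordinal t0k)) //= big1 ?addr0; last first.
    move=> t /eqP tne; rewrite (_ : (1 <= k - t)%N) //=; last by have := ltn_ord t; lia.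
    case: eqP => [E|_]; last by rewrite mulr0.
    exfalso; apply: tne; apply: val_inj => /=.
    move: E; have := ltn_ord t; lia.
  rewrite ifT; last by apply/andP; split; [lia | apply/eqP; lia].
  rewrite (_ : (k - (k.-1 - d)).-1 = d)%N; last by lia.
  rewrite -bin_sub ?leq_addl // addnK.
  have -> : (-1) ^+ k.-1 = (-1) ^+ (k.-1 - d) * (-1) ^+ d :> algC.
    by rewrite -exprD; congr (_ ^+ _); lia.
  ring.
rewrite mulr0 big1 // => t _.
rewrite (_ : (d == (k - t).-1) = false) ?andbF ?mulr0 //.
by apply/negbTE/eqP; have := ltn_ord t; lia.
Qed.

Lemma des_map_bump (i : nat) (w : seq nat) : des (map (bump i) w) = des w.
Proof.
elim: w => [|a w IH] //; case: w IH => [|b w] IH //.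
rewrite map_cons map_cons des_cons2 -map_cons IH des_cons2; congr (nat_of_bool _ + _)%N.
by rewrite /bump; case: (leqP i a); case: (leqP i b) => /=; lia.
Qed.

Lemma des_le (w : seq nat) : (des w <= (size w).-1)%N.
Proof.
elim: w => [|a w IH] //; case: w IH => [|b w] IH //.
rewrite des_cons2 /=; move: IH => /=; case: (b < a)%N => /=; lia.
Qed.

Lemma sum_f (u : seq nat) (x : nat) (f : nat -> algC) : x \notin u ->
  \sum_(j < (size u).+1) f (des (ins j x u)) =
  (size u).+1%:R * f (des u) + (size u - des u)%:R * (f (des u).+1 - f (des u)).
Proof.
move=> xu; set d := des u.
have E : forall j : 'I_(size u).+1, f (des (ins j x u)) =
    f d + ((des (ins j x u))%:R - d%:R) * (f d.+1 - f d).
  move=> j; have /andP [H1 H2] := des_ins_bound u x j; rewrite -/d in H1 H2.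
  case: (ltngtP (des (ins j x u)) d) => H; first by lia.
    rewrite (_ : des (ins j x u) = d.+1); last by lia.
    by rewrite -addn1 natrD; ring.
  by rewrite H; ring.
rewrite (eq_bigr _ (fun j _ => E j)) big_split /= sumr_const card_ord.
rewrite -big_distrl /= sumrB sumr_const card_ord -natr_sum.
have S := des_ins_sum xu; rewrite -/d in S.
have Hd : (d <= size u)%N by have := des_le u; rewrite -/d; lia.
have -> : (\sum_(j < (size u).+1) des (ins j x u))%N = ((size u).+1 * d + size u - d)%N by lia.
rewrite natrB; last by nia.
rewrite natrD natrM natrB //.
rewrite -addn1 natrD.
ring.
Qed.

Lemma gC_nat n' k d : (1 <= k)%N -> (d < n')%N ->
  ((d.+1) * (if (d < k)%N then 'C(n'.+1 + (k.-1 - d), n'.+1) else 0) +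
   (n' - d) * (if (d.+1 < k)%N then 'C(n'.+1 + (k.-1 - d.+1), n'.+1) else 0) =
   k * (if (d < k)%N then 'C(n' + (k.-1 - d), n') else 0))%N.
Proof.
move=> k1 dn.
case: (ltnP d k) => dk; last first.
  by rewrite (_ : (d.+1 < k)%N = false) ?muln0 //; lia.
case: (ltnP d.+1 k) => dk2; last first.
  have -> : k = d.+1 by lia.
  by rewrite /= subnn !addn0 !binn; lia.
have [m' km] : exists m', k = (d + m'.+2)%N by exists (k - d.+2)%N; lia.
subst k.
rewrite (_ : ((d + m'.+2).-1 - d = m'.+1)%N); last by lia.
rewrite (_ : ((d + m'.+2).-1 - d.+1 = m')%N); last by lia.
set N := (n' + m'.+1)%N.
have e1 : (n'.+1 + m'.+1 = N.+1)%N by rewrite /N; lia.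
have e2 : (n'.+1 + m' = N)%N by rewrite /N; lia.
rewrite e1 e2 binS.
have H2 := mul_bin_left N n'.
rewrite (_ : (N - n' = m'.+1)%N) in H2; last by rewrite /N; lia.
move: H2; set G1 := 'C(N, n'.+1); set X := 'C(N, n').
move=> H2; nia.
Qed.

Lemma gC_key n' k d : (1 <= k)%N -> (d < n')%N ->
  (n'.+1)%:R * gC n'.+1 k d + (n' - d)%:R * (gC n'.+1 k d.+1 - gC n'.+1 k d)
  = k%:R * gC n' k d.
Proof.
move=> k1 dn.
have -> : forall (a b : nat) (x y : algC), (b <= a)%N ->
    a%:R * x + b%:R * (y - x) = (a - b)%:R * x + b%:R * y.
  by move=> a b x y ba; rewrite natrB //; ring.
  rewrite (_ : (n'.+1 - (n' - d) = d.+1)%N); last by lia.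
  rewrite /gC.
  have H := gC_nat k1 dn.
  have : ((d.+1 * (if (d < k)%N then 'C(n'.+1 + (k.-1 - d), n'.+1) else 0) +
   (n' - d) * (if (d.+1 < k)%N then 'C(n'.+1 + (k.-1 - d.+1), n'.+1) else 0))%:R =
   (k * (if (d < k)%N then 'C(n' + (k.-1 - d), n') else 0))%:R :> algC) by rewrite H.
  rewrite natrD !natrM.
  by case: (d < k)%N; case: (d.+1 < k)%N; rewrite ?mulr0 ?muln0.
lia.
Qed.

Lemma sq_sign (j : nat) : (-1) ^+ j * (-1) ^+ j = 1 :> algC.
Proof. by rewrite -exprMn mulrNN mulr1 expr1n. Qed.

Lemma part1 n' (i : 'I_n'.+1) k (t : 'S_n') : (1 <= k)%N -> (0 < n')%N ->
  bd i (lam n'.+1 k) t = (-1) ^+ i * k%:R * lam n' k t.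
Proof.
move=> k1 n1.
rewrite bd_lift.
set u := map (bump i) (word t).
have su : size u = n' by rewrite /u size_map size_word.
have du : des u = des (word t) by rewrite des_map_bump.
under eq_bigr => j _.
  rewrite lamE // sgnp_lift word_lift -/u.
  have -> : (-1) ^+ j * ((-1) ^+ k.-1 * ((-1) ^+ (j + i)%N * sgnp t) * gC n'.+1 k (des (ins j i u)))
     = ((-1) ^+ i * (-1) ^+ k.-1 * sgnp t) * gC n'.+1 k (des (ins j i u)).
    rewrite exprD; have := sq_sign j; move: ((-1) ^+ j) => a ha.
    rewrite -[RHS]mul1r -ha; ring.
  over.
rewrite -big_distrr /=.
have := sum_f (fun d => gC n'.+1 k d) (notin_bump i (word t)).
rewrite -/u su => ->.
rewrite du gC_key //; last by have := des_le (word t); rewrite size_word; lia.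
rewrite lamE //; ring.
Qed.

Lemma vdm_unit r : vdm r \in unitmx.
Proof.
have -> : vdm r = diag_mx (\row_(a < r) (a.+1)%:R) *m
                  (Vandermonde r (\row_(j < r) ((j.+1)%:R : algC)))^T.
  apply/matrixP => a b; rewrite mul_diag_mx !mxE exprS; done.
rewrite unitmxE unitfE det_mulmx det_tr det_Vandermonde det_diag.
rewrite mulf_neq0 //.
  by apply/prodf_neq0 => a _; rewrite mxE pnatr_eq0.
apply/prodf_neq0 => a _; apply/prodf_neq0 => b ab; rewrite !mxE subr_eq0 eqr_nat.
by apply/eqP => E; move: ab; rewrite ltnNge -ltnS -E ltnSn.
Qed.

Lemma prod_rising (x r : nat) : (\prod_(m < r) (x.+1 + m) = r`! * 'C(r + x, r))%N.
Proof.
elim: r => [|r IH]; first by rewrite big_ord0 bin0.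
rewrite big_ord_recr /= IH factS.
have H := mul_bin_diag (r.+1 + x) r.
move: H; rewrite addSn /=.
set A := (binomial (r + x) r); set B := (binomial (r.+1 + x) r.+1) => H.
nia.
Qed.

Lemma prod_eval (r k d : nat) : (d < r)%N ->
  \prod_(m < r) ((k%:R : algC) - (d%:R - m%:R)) =
  (r`! * (if (d < k)%N then 'C(r + (k.-1 - d), r) else 0))%:R.
Proof.
move=> dr.
case: (ltnP d k) => dk.
  rewrite -prod_rising natr_prod; apply: eq_bigr => m _.
  rewrite (_ : ((k.-1 - d).+1 + m = (k - d) + m)%N); last by lia.
  by rewrite natrD natrB 1?ltnW //; ring.
have m0 : (d - k < r)%N by lia.
rewrite muln0 (bigD1 (Ordinal m0)) //= natrB //.
rewrite (_ : (k%:R - (d%:R - (d%:R - k%:R))) = 0) ?mul0r //; ring.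
Qed.

Lemma lam_poly r (t : 'S_r) k : (0 < r)%N -> (1 <= k)%N ->
  (-1) ^+ k.-1 * lam r k t = \sum_(b < r) (k%:R) ^+ b.+1 * eul r b.+1 t.
Proof.
move=> r0 k1.
set d := des (word t).
have dr : (d < r)%N by have := des_le (word t); rewrite size_word -/d; lia.
pose F := \col_(a < r) ((-1) ^+ a * lam r a.+1 t) : 'cV[algC]_r.
pose c := invmx (vdm r) *m F.
have eulE : forall b : 'I_r, eul r b.+1 t = c b 0.
  move=> b; rewrite /eul (big_pred1 b) => [|b']; last by rewrite /= eqSS.
  by rewrite !mxE; apply: eq_bigr => a _; rewrite mxE.
pose q : {poly algC} := \sum_(b < r) c b 0 *: 'X^(b.+1).
pose p : {poly algC} := (sgnp t / (r`!)%:R) *: \prod_(m < r) ('X - (d%:R - m%:R)%:P).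
have hp : forall k, p.[k%:R] = (-1) ^+ k.-1 * lam r k t.
  move=> k'; rewrite hornerZ horner_prod.
  under eq_bigr do rewrite hornerXsubC.
  rewrite prod_eval //.
  case: k' => [|k'].
    by rewrite /lam big_ord0 mulr0 muln0 mulr0.
  rewrite lamE // /= !mulrA sq_sign mul1r /gC -/d natrM.
  have nz : (r`!)%:R != 0 :> algC by rewrite pnatr_eq0 -lt0n fact_gt0.
  by case: (d < k'.+1)%N; rewrite /= ?mulr0 //; field.
have hq : forall x, q.[x] = \sum_(b < r) x ^+ b.+1 * c b 0.
  move=> x; rewrite horner_sum; apply: eq_bigr => b _.
  by rewrite hornerZ hornerXn mulrC.
have agree : forall k', (k' <= r)%N -> p.[k'%:R] = q.[k'%:R].
  case=> [|a] ar.
    rewrite hp hq /lam big_ord0 mulr0 big1 // => b _.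
    by rewrite exprS mul0r mul0r.
  have Va : F (Ordinal ar) 0 = (vdm r *m c) (Ordinal ar) 0.
    by rewrite /c mulmxA mulmxV ?vdm_unit // mul1mx.
  rewrite hp hq; move: Va; rewrite !mxE => ->.
  by apply: eq_bigr => b _; rewrite mxE.
have pq : p = q.
  apply/eqP; rewrite -subr_eq0; apply/negPn/negP => nz.
  have rts : all (root (p - q)) [seq m%:R | m <- iota 0 r.+1].
    apply/allP => y /mapP [m]; rewrite mem_iota add0n => mr ->.
    by rewrite /root hornerD hornerN agree // subrr.
  have urs : uniq [seq (m%:R : algC) | m <- iota 0 r.+1].
    rewrite map_inj_uniq ?iota_uniq // => m1 m2 /eqP.
    by rewrite eqr_nat => /eqP.
  have := max_poly_roots nz rts urs.
  rewrite size_map size_iota.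
  have sp : (size p <= r.+1)%N.
    rewrite (leq_trans (size_scale_leq _ _)) //.
    by rewrite size_prod_XsubC /index_enum -enumT size_enum_ord.
  have sq : (size q <= r.+1)%N.
    rewrite (leq_trans (size_sum _ _ _)) //.
    apply/bigmax_leqP => b _.
    by rewrite (leq_trans (size_scale_leq _ _)) // size_polyXn ltnS ltn_ord.
  have := size_polyD p (- q); rewrite size_polyN.
  by move=> H1 H2; have := leq_trans H2 H1; rewrite leq_max !ltnNge sp sq.
rewrite -hp pq hq; apply: eq_bigr => b _; by rewrite eulE.
Qed.

Lemma eul0 r (s : 'S_r) : eul r 0 s = 0.
Proof. by rewrite /eul big_pred0. Qed.

Lemma part2 n' (i : 'I_n'.+1) k (t : 'S_n') : (0 < n')%N -> (1 <= k <= n'.+1)%N ->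
  bd i (eul n'.+1 k) t = (-1) ^+ i * eul n' k.-1 t.
Proof.
move=> n1 /andP [k1 kn].
have Kn : (k.-1 < n'.+1)%N by lia.
set K := Ordinal Kn.
set V' := invmx (vdm n'.+1).
have eulE : forall s, eul n'.+1 k s = \sum_(a < n'.+1) V' K a * ((-1) ^+ a * lam n'.+1 a.+1 s).
  move=> s; rewrite /eul (big_pred1 K) // => b /=.
  apply/eqP/eqP => [E|E]; first by apply: val_inj => /=; lia.
  by rewrite E /=; lia.
rewrite bd_lift.
under eq_bigr do rewrite eulE big_distrr.
rewrite exchange_big /=.
under eq_bigr => a _.
  rewrite (eq_bigr (fun j : 'I_n'.+1 => V' K a * (-1) ^+ a * ((-1) ^+ j * lam n'.+1 a.+1 (lift_perm j i t)))); last first.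
    by move=> j _; ring.
  rewrite -big_distrr /= -bd_lift part1 //.
  over.
pose E := \col_(c < n'.+1) eul n' c t.
have VE : forall a : 'I_n'.+1, (vdm n'.+1 *m E) a 0 = a.+1%:R * ((-1) ^+ a * lam n' a.+1 t).
  move=> a; rewrite (lam_poly t n1 (ltn0Sn a)) /= mxE big_ord_recl /= !mxE eul0 mulr0 add0r.
  rewrite big_distrr; apply: eq_bigr => b _; rewrite !mxE /= exprS; ring.
have -> : eul n' k.-1 t = (V' *m (vdm n'.+1 *m E)) K 0.
  by rewrite mulmxA mulVmx ?vdm_unit // mul1mx mxE.
rewrite mxE mulr_sumr; apply: eq_bigr => a _; rewrite VE; ring.
Qed.

Unset Implicit Arguments.

Theorem theorem2p1 (n : nat) (i : 'I_n) : (2 <= n)%N ->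
  (forall k : nat, (1 <= k)%N -> forall t : 'S_n.-1,
     bd i (lam n k) t = (-1) ^+ i * k%:R * lam n.-1 k t) /\
  (forall k : nat, (1 <= k <= n)%N -> forall t : 'S_n.-1,
     bd i (eul n k) t = (-1) ^+ i * eul n.-1 k.-1 t).
Proof.
case: n i => [|n'] i // n2; have n1 : (0 < n')%N by lia.
split => k kk t.
  exact: part1.
exact: part2.
Qed.
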